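(* Let $n\ge3$ and $m,k\ge1$ be integers, let $t,u\in\mathbb{Z}_n$ with $t^2\equiv u\pmod n$, and let $G$ be the set of all $m\times k$ matrices over $\mathbb{Z}_n$ with the operation $[a_{ij}]*[b_{ij}]=[(t a_{ij}+u b_{ij})\bmod n]$. If $t+u\equiv 1\pmod n$, then $(G,* )$ is an AG-band.
   Context: An AG-groupoid is a set with a binary operation satisfying $(a*b)*c=(c*b)*a$ for all $a,b,c$. An AG-band is an AG-groupoid in which every element is idempotent, i.e. $a*a=a$ for all $a$. *)

(* Defs.v *)
From mathcomp Require Import all_boot all_algebra.
Set Implicit Arguments.
Unset Strict Implicit.
Unset Printing Implicit Defensive.
Import GRing.Theory.
Local Open Scope ring_scope.

Definition AG_groupoid (G : Type) (op : G -> G -> G) : Prop :=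
  forall a b c : G, op (op a b) c = op (op c b) a.

Definition AG_band (G : Type) (op : G -> G -> G) : Prop :=
  AG_groupoid op /\ forall a : G, op a a = a.

Definition affine_mx_op (n m k : nat) (t u : 'Z_n)
  (A B : 'M['Z_n]_(m, k)) : 'M['Z_n]_(m, k) :=
  \matrix_(i, j) (t * A i j + u * B i j).

(* Main.v *)
Require Import Defs.
From mathcomp Require Import all_boot all_algebra.
From mathcomp Require Import ring.
Local Open Scope ring_scope.
Import GRing.Theory.

Theorem mainTheorem8 (n m k : nat) (t u : 'Z_n)
  (hn : (3 <= n)%N) (hm : (1 <= m)%N) (hk : (1 <= k)%N)
  (htu : t ^+ 2 = u) (h1 : t + u = 1) :
  AG_band (@affine_mx_op n m k t u).
Proof.
split.
- move=> a b c; apply/matrixP => i j; rewrite /affine_mx_op !mxE.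
  rewrite -htu; ring.
- move=> a; apply/matrixP => i j; rewrite /affine_mx_op !mxE.
  by rewrite -mulrDl h1 mul1r.
Qed.
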